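(* Let $X$ be a separated metric compact Hausdorff space with metric $d$ and let $A\subseteq X$ be a closed subset, with the induced topology and metric, so that the inclusion $A\hookrightarrow X$ is an embedding. Let $q_0,q_1\colon X\to P$ be the pushout in $\mathbf{MetCH_{sep}}$ of $A\hookrightarrow X$ along itself. Then the kernel metric of $\binom{q_0}{q_1}\colon X+X\to P$, i.e. $((x,i),(y,j))\mapsto d_P(q_i(x),q_j(y))$, equals $\gamma^A$.
   Context: A metric on a set $X$ is a map $d\colon X\times X\to[0,\infty]$ with $d(x,x)=0$ and $d(x,z)\le d(x,y)+d(y,z)$ (not necessarily symmetric, $\infty$ allowed); separated means $d(x,y)=0=d(y,x)$ implies $x=y$. A separated metric compact Hausdorff space is a compact Hausdorff space with a separated metric continuous $X\times X\to[0,\infty]$ for the upper topology on $[0,\infty]$ (open sets $]u,\infty]$); $\mathbf{MetCH_{sep}}$ is the category of these with continuous non-expansive maps; an embedding is an injective morphism preserving distances. $X+X$ is the coproduct with elements $(x,i)$, $i\in\{0,1\}$. $\gamma^A\colon(X+X)\times(X+X)\to[0,\infty]$ is defined by $\gamma^A((x,i),(y,i))=d(x,y)$ and $\gamma^A((x,i),(y,1-i))=\inf_{a\in A}(d(x,a)+d(a,y))$ for $x,y\in X$, $i\in\{0,1\}$. *)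

(* Defs.v *)
From HB Require Import structures.
From mathcomp Require Import all_boot all_order all_algebra.
From mathcomp Require Import all_classical all_reals all_analysis.
Set Implicit Arguments. Unset Strict Implicit. Unset Printing Implicit Defensive.
Import Order.TTheory GRing.Theory Num.Theory.
Local Open Scope classical_set_scope.
Local Open Scope ring_scope.
Local Open Scope ereal_scope.

(* A "metric" in the sense of the paper: d : X x X -> [0, +oo], d x x = 0,
   triangle inequality; not necessarily symmetric, +oo allowed.
   [0, +oo] is rendered as the nonnegative part of \bar R. *)
Definition is_metric (R : realType) (T : Type) (d : T -> T -> \bar R) : Prop :=
  [/\ (forall x y, 0 <= d x y),
      (forall x, d x x = 0) &
      (forall x y z, d x z <= d x y + d y z)].

Definition separated_metric (R : realType) (T : Type) (d : T -> T -> \bar R) : Prop :=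
  forall x y, d x y = 0 -> d y x = 0 -> x = y.

(* continuity of d : T x T -> [0,+oo] for the upper topology on [0,+oo],
   whose (sub)basic opens are ]u, +oo]: preimages of ]u,+oo] are open. *)
Definition upper_continuous (R : realType) (T : topologicalType)
  (d : T -> T -> \bar R) : Prop :=
  forall u : \bar R, open [set p : T * T | u < d p.1 p.2].

Definition MetCH_sep_obj (R : realType) (T : topologicalType)
  (d : T -> T -> \bar R) : Prop :=
  [/\ compact [set: T], hausdorff_space T, is_metric d,
      separated_metric d & upper_continuous d].

Definition MetCH_mor (R : realType) (T U : topologicalType)
  (dT : T -> T -> \bar R) (dU : U -> U -> \bar R) (f : T -> U) : Prop :=
  continuous f /\ (forall x y, dU (f x) (f y) <= dT x y).

(* A cocone
   over the span X <- A -> X is a pair f0, f1 with f0 \o incl = f1 \o incl,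
   i.e. f0 and f1 agree on A. *)
Definition is_pushout_along_self (R : realType) (X : topologicalType)
  (d : X -> X -> \bar R) (A : set X)
  (P : topologicalType) (dP : P -> P -> \bar R) (q0 q1 : X -> P) : Prop :=
  [/\ MetCH_sep_obj dP, MetCH_mor d dP q0, MetCH_mor d dP q1,
      (forall a, A a -> q0 a = q1 a) &
      (forall (Q : topologicalType) (dQ : Q -> Q -> \bar R),
         MetCH_sep_obj dQ ->
         forall f0 f1 : X -> Q, MetCH_mor d dQ f0 -> MetCH_mor d dQ f1 ->
         (forall a, A a -> f0 a = f1 a) ->
         exists! h : P -> Q,
           [/\ MetCH_mor dP dQ h, h \o q0 = f0 & h \o q1 = f1])].

(* The metric gamma^A on X + X; points are pairs (x, i), i : bool
   (false = 0, true = 1). *)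
Definition gammaA (R : realType) (X : Type) (d : X -> X -> \bar R) (A : set X)
  (p q : X * bool) : \bar R :=
  if p.2 == q.2 then d p.1 q.1
  else ereal_inf [set d p.1 a + d a q.1 | a in A].

Definition kernel_metric (R : realType) (X P : Type) (dP : P -> P -> \bar R)
  (q0 q1 : X -> P) (p q : X * bool) : \bar R :=
  let q_ i := if i then q1 else q0 in
  dP (q_ p.2 p.1) (q_ q.2 q.1).

(* Main.v *)
Require Import Defs.
From HB Require Import structures.
From mathcomp Require Import all_boot all_order all_algebra.
From mathcomp Require Import all_classical all_reals all_analysis.
From mathcomp Require Import lra.
Set Implicit Arguments. Unset Strict Implicit.
Import Order.TTheory GRing.Theory Num.Theory.
Local Open Scope classical_set_scope.
Local Open Scope ring_scope.
Local Open Scope ereal_scope.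
Local Open Scope quotient_scope.

Lemma split_sum (R : realType) (al be : \bar R) (m : R) : 0 <= al -> 0 <= be ->
  m%:E < al + be -> exists s t : R, [/\ s%:E < al, t%:E < be & (m < s + t)%R].
Proof.
case: al => [r1||] //; case: be => [r2||] // h1 h2.
- rewrite -EFinD lte_fin => h. exists (r1 - (r1 + r2 - m)/3)%R, (r2 - (r1 + r2 - m)/3)%R.
  rewrite !lte_fin; split; lra.
- move=> _; exists (r1 - 1)%R, (m - r1 + 2)%R; rewrite !lte_fin ?ltry; split => //; lra.
- move=> _; exists (m - r2 + 2)%R, (r2 - 1)%R; rewrite !lte_fin ?ltry; split => //; lra.
- move=> _; exists m, 1%R; rewrite ?ltry; split => //; lra.
Qed.

Lemma lsc_inf (R : realType) (X : topologicalType) (d : X -> X -> \bar R) (A : set X) :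
  (forall x y, 0 <= d x y) -> upper_continuous d -> compact A ->
  forall (x y : X) (u : R), (forall a, A a -> u%:E < d x a + d a y) ->
  exists v : R, (u < v)%R /\ exists Wx Wy, [/\ nbhs x Wx, nbhs y Wy &
    forall x' y', Wx x' -> Wy y' -> forall a, A a -> v%:E <= d x' a + d a y'].
Proof.
move=> d0 hu cA x y u H.
have := (compact_near_coveringP A).1 cA (R * (X * X))%type
  (filter_prod (at_right u) (filter_prod (nbhs x) (nbhs y)))
  (fun i a => i.1%:E <= d i.2.1 a + d a i.2.2) _.
case.
- move=> a Aa; have [s [t [hs ht hst]]] := @split_sum R _ _ _ (d0 _ _) (d0 _ _) (H a Aa).
  have O1 : nbhs (x, a) [set p | s%:E < d p.1 p.2].
    by apply: open_nbhs_nbhs; split; [exact: hu|].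
  have O2 : nbhs (a, y) [set p | t%:E < d p.1 p.2].
    by apply: open_nbhs_nbhs; split; [exact: hu|].
  case: O1 => [[Wx Na1] /= [Wx0 Na10] H1].
  case: O2 => [[Na2 Wy] /= [Na20 Wy0] H2].
  exists (Na1 `&` Na2, [set v | (v < s + t)%R] `*` (Wx `*` Wy)).
    split; first exact: filterI.
    exists ([set v | (v < s + t)%R], Wx `*` Wy) => //; split; first exact: nbhs_right_lt.
    by exists (Wx, Wy).
  move=> [a' [v [x' y']]] /= [[Na1a' Na2a'] [vlt [Wxx' Wyy']]].
  have h1 : s%:E < d x' a' by apply: (H1 (x', a')).
  have h2 : t%:E < d a' y' by apply: (H2 (a', y')).
  apply: (@le_trans _ _ (s%:E + t%:E)); first by rewrite -EFinD lee_fin ltW.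
  by apply: leeD; apply: ltW.
- move=> [Vr Wxy] /= [Vr0 Wxy0] HH.
  case: Wxy0 => [[Wx Wy] /= [Wx0 Wy0] HW].
  have [v [Vv uv]] := filter_ex (filterI Vr0 (nbhs_right_gt u)).
  exists v; split => //; exists Wx, Wy; split => // x' y' hx hy a Aa.
  by apply: (HH (v, (x', y'))) => //; split => //; apply: HW.
Qed.

Lemma inf_le_add (R : realType) (X : Type) (A : set X) (f g : X -> \bar R) (c : \bar R) :
  0 <= c -> (forall a, 0 <= g a) -> (forall a, A a -> f a <= c + g a) ->
  ereal_inf (f @` A) <= c + ereal_inf (g @` A).
Proof.
case: c => [r||] // _ g0 H.
- rewrite addeC -leeBlDr //; apply/ereal_infP => _ [a Aa <-].
  rewrite leeBlDr //; apply: le_trans (_ : f a <= _); first by apply: ereal_inf_lbound; exists a.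
  by rewrite addeC; exact: H.
- rewrite addye ?leey //.
  have : 0 <= ereal_inf (g @` A) by apply/ereal_infP => _ [a _ <-].
  by case: (ereal_inf _).
Qed.

Section gam.
Variables (R : realType) (X : Type) (d : X -> X -> \bar R) (A : set X).
Hypothesis hm : is_metric d.

Let d0 : forall x y, 0 <= d x y. Proof. by case: hm. Qed.
Let dxx : forall x, d x x = 0. Proof. by case: hm. Qed.
Let dtri : forall x y z, d x z <= d x y + d y z. Proof. by case: hm. Qed.

Lemma inf_ge x y : d x y <= ereal_inf [set d x a + d a y | a in A].
Proof. by apply/ereal_infP => _ [a _ <-]. Qed.

Lemma inf_A x y : A x \/ A y -> ereal_inf [set d x a + d a y | a in A] = d x y.
Proof.
move=> h; apply/le_anti; rewrite inf_ge andbT.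
case: h => h; apply: ereal_inf_lbound.
  by exists x => //; rewrite dxx add0e.
by exists y => //; rewrite dxx adde0.
Qed.

Lemma gam0 p q : 0 <= gammaA d A p q.
Proof.
rewrite /gammaA; case: ifP => _ //; apply/ereal_infP => _ [a _ <-].
exact: adde_ge0.
Qed.

Lemma gamxx p : gammaA d A p p = 0.
Proof. by rewrite /gammaA eqxx. Qed.

Lemma gamA1 x i q : A x -> gammaA d A (x, i) q = d x q.1.
Proof. by move=> Ax; rewrite /gammaA; case: ifP => // _; rewrite inf_A //; left. Qed.

Lemma gamA2 p y j : A y -> gammaA d A p (y, j) = d p.1 y.
Proof. by move=> Ay; rewrite /gammaA; case: ifP => // _; rewrite inf_A //; right. Qed.

Lemma gamtri p q r : gammaA d A p r <= gammaA d A p q + gammaA d A q r.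
Proof.
case: p q r => [x i] [y j] [z k]; rewrite /gammaA /=.
case: i; case: j; case: k => //=.
all: try by apply: le_trans (leeD (inf_ge x y) (inf_ge y z)).
- apply: inf_le_add => [//|a|a _]; first exact: adde_ge0.
  by apply: le_trans (leeD (dtri x y a) (lexx _)) _; rewrite addeA.
- rewrite addeC; apply: inf_le_add => [//|a|a _]; first exact: adde_ge0.
  apply: le_trans (leeD (lexx _) (dtri a y z)) _.
  by rewrite addeA addeC.
- rewrite addeC; apply: inf_le_add => [//|a|a _]; first exact: adde_ge0.
  apply: le_trans (leeD (lexx _) (dtri a y z)) _.
  by rewrite addeA addeC.
- apply: inf_le_add => [//|a|a _]; first exact: adde_ge0.
  by apply: le_trans (leeD (dtri x y a) (lexx _)) _; rewrite addeA.
Qed.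

End gam.

Definition erp (X : Type) (A : set X) (p q : X * bool) : Prop :=
  p = q \/ (p.1 = q.1 /\ A p.1).
Definition erb (X : Type) (A : set X) : rel (X * bool) :=
  fun p q => `[< erp A p q >].

Lemma erb_refl (X : Type) (A : set X) : reflexive (erb A).
Proof. by move=> p; apply/asboolP; left. Qed.
Lemma erb_sym (X : Type) (A : set X) : symmetric (erb A).
Proof.
move=> p q; apply/asboolP/asboolP => -[->|[e Ap]]; (try by left);
  by right; split => //; rewrite -e.
Qed.
Lemma erb_trans (X : Type) (A : set X) : transitive (erb A).
Proof.
move=> q p r /asboolP [->//|[e1 A1]] /asboolP [<-|[e2 A2]]; apply/asboolP.
  by right.
by right; split => //; rewrite e1.
Qed.

Definition erel (X : Type) (A : set X) : equiv_rel (X * bool) :=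
  EquivRel (erb A) (@erb_refl X A) (@erb_sym X A) (@erb_trans X A).

Definition Qt (X : topologicalType) (A : set X) : topologicalType :=
  quotient_topology {eq_quot (erel A)}.

Definition piQ (X : topologicalType) (A : set X) (p : X * bool) : Qt A :=
  \pi_({eq_quot (erel A)}) p.

Lemma piQP (X : topologicalType) (A : set X) p q : piQ A p = piQ A q <-> erp A p q.
Proof.
rewrite /piQ; split.
  by move/eqquotP => /asboolP.
by move=> h; apply/eqquotP; apply/asboolP.
Qed.

Lemma piQ_repr (X : topologicalType) (A : set X) (c : Qt A) : piQ A (repr c) = c.
Proof. exact: reprK. Qed.

Lemma piQ_cont (X : topologicalType) (A : set X) : continuous (piQ A).
Proof. exact: pi_continuous. Qed.

Lemma erp_sym (X : Type) (A : set X) p q : erp A p q -> erp A q p.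
Proof. by move=> h; apply/asboolP; rewrite -/(erb A q p) erb_sym; apply/asboolP. Qed.

Lemma erp_repr (X : topologicalType) (A : set X) p : erp A (repr (piQ A p)) p.
Proof. by apply/piQP; rewrite piQ_repr. Qed.

Definition liftQ (X : topologicalType) (A : set X) (W : set (X * bool)) : set (Qt A) :=
  [set c | W (repr c)].
Arguments liftQ {X} A W.

Lemma liftQ_pre (X : topologicalType) (A : set X) (W : set (X * bool)) :
  (forall p q, erp A p q -> W p -> W q) -> piQ A @^-1` liftQ A W = W.
Proof.
move=> sat; apply/seteqP; split => p /=.
  by apply: sat; exact: erp_repr.
by apply: sat; apply: erp_sym; exact: erp_repr.
Qed.

Lemma liftQ_open (X : topologicalType) (A : set X) (W : set (X * bool)) :
  (forall p q, erp A p q -> W p -> W q) -> open W -> open (liftQ A W).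
Proof.
move=> sat oW; change (open (piQ A @^-1` liftQ A W)).
by rewrite liftQ_pre.
Qed.

Lemma Qt_compact (X : topologicalType) (A : set X) :
  compact [set: X] -> compact [set: Qt A].
Proof.
move=> cX.
have -> : [set: Qt A] = piQ A @` [set: X * bool].
  apply/seteqP; split => c // _; exists (repr c) => //; exact: piQ_repr.
apply: continuous_compact.
  apply: continuous_subspaceT; exact: piQ_cont.
rewrite -setXTT; apply: compact_setX => //; exact: bool_compact.
Qed.

Section gam2.
Variables (R : realType) (X : Type) (d : X -> X -> \bar R) (A : set X).
Hypothesis hm : is_metric d.

Lemma gam_resp1 p p' q : erp A p p' -> gammaA d A p q = gammaA d A p' q.
Proof.
case: p p' => [x i] [x' i'] [->//|/= [<- Ax]].
by rewrite !gamA1.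
Qed.

Lemma gam_resp2 p q q' : erp A q q' -> gammaA d A p q = gammaA d A p q'.
Proof.
case: q q' => [y j] [y' j'] [->//|/= [<- Ay]].
by rewrite !gamA2.
Qed.

Lemma gam_resp p p' q q' : erp A p p' -> erp A q q' ->
  gammaA d A p q = gammaA d A p' q'.
Proof. by move=> h1 h2; rewrite (gam_resp1 _ h1) (gam_resp2 _ h2). Qed.
End gam2.

Lemma openX' (U V : topologicalType) (S : set U) (T : set V) :
  open S -> open T -> open (S `*` T).
Proof.
move=> oS oT; rewrite openE => -[x y] [Sx Ty]; exists (S, T) => //=.
by split; apply: open_nbhs_nbhs.
Qed.

Definition satQ (X : Type) (A : set X) (W : set (X * bool)) :=
  forall p q, erp A p q -> W p -> W q.

Lemma liftQ_pi (X : topologicalType) (A : set X) (W : set (X * bool)) p :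
  satQ A W -> W p -> liftQ A W (piQ A p).
Proof. by move=> sat Wp; rewrite -[_ (piQ A p)]/((piQ A @^-1` liftQ A W) p) liftQ_pre. Qed.

Lemma Qt_hausdorff (X : topologicalType) (A : set X) :
  hausdorff_space X -> closed A -> hausdorff_space (Qt A).
Proof.
move=> hX cA; rewrite open_hausdorff => c1 c2 neq.
have e1 := piQ_repr c1; have e2 := piQ_repr c2.
case: (repr c1) e1 => x i e1; case: (repr c2) e2 => y j e2.
have [exy|nxy] := eqVneq x y.
- subst y.
  have nA : ~ A x.
    move=> Ax; move/negP: neq; apply; apply/eqP; rewrite -e1 -e2; apply/piQP.
    by right.
  have nij : i != j.
    apply/negP => /eqP eij; move/negP: neq; apply; apply/eqP; rewrite -e1 -e2 eij //.
  have sat k : satQ A ((~` A) `*` [set k]).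
    by move=> p q [->//|[e Ap]] [nAp _].
  exists (liftQ A ((~` A) `*` [set i]), liftQ A ((~` A) `*` [set j])) => /=.
    by rewrite !inE -e1 -e2; split; apply: liftQ_pi.
  split; first by apply: liftQ_open; [exact: sat|]; apply: openX';
    [exact: closed_openC | exact: discrete_open].
    by apply: liftQ_open; [exact: sat|]; apply: openX';
    [exact: closed_openC | exact: discrete_open].
  apply/eqP; apply/seteqP; split => c // [[_ h1] [_ h2]].
  by move: nij; rewrite -h1 -h2 /= eqxx.
- move: hX; rewrite open_hausdorff => /(_ x y nxy) [[U V] /= [xU yV] [oU oV /eqP UV0]].
  have sat (S : set X) : satQ A (S `*` setT).
    by move=> p q [->//|[e _]] [Sp _]; split => //; rewrite -e.
  exists (liftQ A (U `*` setT), liftQ A (V `*` setT)) => /=.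
    rewrite !inE -e1 -e2; move: xU yV; rewrite !inE => xU yV.
    by split; apply: liftQ_pi.
  split; first by apply: liftQ_open; [exact: sat|]; apply: openX' => //; exact: openT.
    by apply: liftQ_open; [exact: sat|]; apply: openX' => //; exact: openT.
  apply/eqP; apply/seteqP; split => c // [[h1 _] [h2 _]].
  have : (U `&` V) (repr c).1 by split.
  by rewrite UV0.
Qed.

Definition dQ (R : realType) (X : topologicalType) (d : X -> X -> \bar R) (A : set X)
  (c1 c2 : Qt A) : \bar R := gammaA d A (repr c1) (repr c2).

Section dQsec.
Variables (R : realType) (X : topologicalType) (d : X -> X -> \bar R) (A : set X).
Hypothesis hm : is_metric d.
Hypothesis hsep : separated_metric d.
Hypothesis hu : upper_continuous d.
Hypothesis cA : compact A.
Hypothesis clA : closed A.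

Let d0 : forall x y, 0 <= d x y. Proof. by case: hm. Qed.
Let dxx : forall x, d x x = 0. Proof. by case: hm. Qed.
Let dtri : forall x y z, d x z <= d x y + d y z. Proof. by case: hm. Qed.

Lemma dQ_pi p q : dQ d (piQ A p) (piQ A q) = gammaA d A p q.
Proof. by rewrite /dQ; apply: gam_resp => //; exact: erp_repr. Qed.

Lemma dQ_metric : is_metric (dQ d (A := A)).
Proof.
split => [c1 c2|c|c1 c2 c3]; rewrite /dQ.
- exact: gam0.
- exact: gamxx.
- exact: gamtri.
Qed.

Lemma inf0_attain x y : ereal_inf [set d x a + d a y | a in A] = 0 ->
  exists2 a, A a & d x a = 0 /\ d a y = 0.
Proof.
move=> h0; apply: contrapT => hn.
have pos : forall a, A a -> (0%R)%:E < d x a + d a y.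
  move=> a Aa; have : 0 < d x a + d a y; last by [].
  rewrite lt_def adde_ge0 // andbT padde_eq0 //.
  by apply/negP => /andP[/eqP h1 /eqP h2]; apply: hn; exists a.
have [v [v0 [Wx [Wy [Wx0 Wy0 HW]]]]] := lsc_inf d0 hu cA pos.
have : v%:E <= ereal_inf [set d x a + d a y | a in A].
  apply/ereal_infP => _ [a Aa <-]; apply: HW => //; exact: nbhs_singleton.
by rewrite h0 lee_fin leNgt v0.
Qed.

Lemma dQ_sep : separated_metric (dQ d (A := A)).
Proof.
move=> c1 c2; rewrite /dQ.
have e1 := piQ_repr c1; have e2 := piQ_repr c2.
case: (repr c1) e1 => x i e1; case: (repr c2) e2 => y j e2.
rewrite /gammaA /= eq_sym; case: ifP => [/eqP ij h1 h2|ij].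
  by rewrite -e1 -e2 ij (hsep h1 h2).
move=> /inf0_attain [a Aa [xa ay]] /inf0_attain [b Ab [yb bx]].
have ax : d a x = 0.
  apply/le_anti; rewrite d0 andbT; apply: le_trans (dtri a y x) _.
  by rewrite ay add0e; apply: le_trans (dtri y b x) _; rewrite yb bx adde0.
have ya : d y a = 0.
  apply/le_anti; rewrite d0 andbT; apply: le_trans (dtri y x a) _.
  by rewrite xa adde0; apply: le_trans (dtri y b x) _; rewrite yb bx adde0.
have xa' := hsep xa ax; have ya' := hsep ya ay.
subst x y; rewrite -e1 -e2; apply/piQP; right; split => //.
Qed.

End dQsec.

Section ucsec.
Variables (R : realType) (X : topologicalType) (d : X -> X -> \bar R) (A : set X).
Hypothesis hm : is_metric d.
Hypothesis hu : upper_continuous d.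
Hypothesis cA : compact A.
Hypothesis clA : closed A.

Let d0 : forall x y, 0 <= d x y. Proof. by case: hm. Qed.

Lemma near_d x y (u : \bar R) : u < d x y -> exists Wx Wy, [/\ nbhs x Wx, nbhs y Wy &
  forall x' y', Wx x' -> Wy y' -> u < d x' y'].
Proof.
move=> h.
have : nbhs (x, y) [set p | u < d p.1 p.2].
  by apply: open_nbhs_nbhs; split; [exact: hu|].
case=> [[Wx Wy] /= [Wx0 Wy0] HW]; exists Wx, Wy; split => // x' y' h1 h2.
exact: (HW (x', y')).
Qed.

Lemma near_inf x y (u : \bar R) : u < ereal_inf [set d x a + d a y | a in A] ->
  exists Wx Wy, [/\ nbhs x Wx, nbhs y Wy &
  forall x' y', Wx x' -> Wy y' -> u < ereal_inf [set d x' a + d a y' | a in A]].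
Proof.
case: u => [r||] h.
- have pos : forall a, A a -> r%:E < d x a + d a y.
    move=> a Aa; apply: lt_le_trans h _; apply: ereal_inf_lbound; by exists a.
  have [v [rv [Wx [Wy [Wx0 Wy0 HW]]]]] := lsc_inf d0 hu cA pos.
  exists Wx, Wy; split => // x' y' h1 h2.
  apply: (@lt_le_trans _ _ v%:E); first by rewrite lte_fin.
  by apply/ereal_infP => _ [a Aa <-]; exact: HW.
- by move: h; rewrite ltNge leey.
- exists setT, setT; split; try exact: filterT.
  move=> x' y' _ _; apply: (@lt_le_trans _ _ 0); first exact: ltNy0.
  by apply/ereal_infP => _ [a _ <-]; exact: adde_ge0.
Qed.

Lemma nbhsQ (x : X) (i : bool) (Ux : set X) : open Ux -> Ux x ->
  exists N : set (Qt A), nbhs (piQ A (x, i)) N /\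
    forall c, N c -> Ux (repr c).1 /\ erp A (x, (repr c).2) (x, i).
Proof.
move=> oU Ux0; have [Ax|nAx] := pselect (A x).
- have sat : satQ A (Ux `*` setT).
    by move=> p q [->//|[e _]] [Sp _]; split => //; rewrite -e.
  exists (liftQ A (Ux `*` setT)); split.
    apply: open_nbhs_nbhs; split.
      by apply: liftQ_open => //; apply: openX' => //; exact: openT.
    exact: liftQ_pi.
  by move=> c [h _]; split => //; right.
- have sat : satQ A ((Ux `&` ~` A) `*` [set i]).
    by move=> p q [->//|[e Ap]] [[_ nAp] _].
  exists (liftQ A ((Ux `&` ~` A) `*` [set i])); split.
    apply: open_nbhs_nbhs; split.
      apply: liftQ_open => //; apply: openX'; last exact: discrete_open.
      by apply: openI => //; exact: closed_openC.
    exact: liftQ_pi.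
  by move=> c [[h _] /= ->]; split => //; left.
Qed.

Lemma dQ_uc : upper_continuous (dQ d (A := A)).
Proof.
move=> u; rewrite openE => -[c1 c2] /= H.
have e1 := piQ_repr c1; have e2 := piQ_repr c2.
move: H; rewrite /dQ.
case: (repr c1) e1 => x i e1; case: (repr c2) e2 => y j e2 H.
have [Wx1 [Wy1 [Wx10 Wy10 HW1]]] : exists Wx Wy, [/\ nbhs x Wx, nbhs y Wy &
    forall x' y', Wx x' -> Wy y' -> u < d x y -> u < d x' y'].
  have [h|h] := boolP (u < d x y).
    have [Wx [Wy [? ? HW]]] := near_d h; exists Wx, Wy; split => // *; exact: HW.
  exists setT, setT; split; try exact: filterT.
  by move=> x' y' _ _ h'; exfalso; move/negP: h; apply.
have [Wx2 [Wy2 [Wx20 Wy20 HW2]]] : exists Wx Wy, [/\ nbhs x Wx, nbhs y Wy &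
    forall x' y', Wx x' -> Wy y' -> u < ereal_inf [set d x a + d a y | a in A] ->
      u < ereal_inf [set d x' a + d a y' | a in A]].
  have [h|h] := boolP (u < ereal_inf [set d x a + d a y | a in A]).
    have [Wx [Wy [? ? HW]]] := near_inf h; exists Wx, Wy; split => // *; exact: HW.
  exists setT, setT; split; try exact: filterT.
  by move=> x' y' _ _ h'; exfalso; move/negP: h; apply.
have : nbhs x (Wx1 `&` Wx2) by exact: filterI.
rewrite nbhsE => -[Ux [oUx Uxx] UxW].
have : nbhs y (Wy1 `&` Wy2) by exact: filterI.
rewrite nbhsE => -[Uy [oUy Uyy] UyW].
have [N1 [N10 HN1]] := nbhsQ i oUx Uxx.
have [N2 [N20 HN2]] := nbhsQ j oUy Uyy.
rewrite -e1 -e2; exists (N1, N2) => //= -[c1' c2'] /= [/HN1 [U1 E1] /HN2 [U2 E2]].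
have Eg := gam_resp hm E1 E2.
move: H; rewrite -Eg.
have [[W11 W21] [W12 W22]] := (UxW _ U1, UyW _ U2).
case: (repr c1') U1 W11 W21 => x' i' /= U1 W11 W21.
case: (repr c2') U2 W12 W22 => y' j' /= U2 W12 W22.
rewrite /gammaA /=; case: ifP => _.
  exact: HW1.
exact: HW2.
Qed.

End ucsec.

Unset Implicit Arguments. Set Strict Implicit.

Theorem lemma5p11 (R : realType) (X : topologicalType) (d : X -> X -> \bar R)
  (A : set X) (P : topologicalType) (dP : P -> P -> \bar R) (q0 q1 : X -> P) :
  MetCH_sep_obj d -> closed A ->
  is_pushout_along_self d A dP q0 q1 ->
  kernel_metric dP q0 q1 = gammaA d A.
Proof.
move=> [cX hX hm hsep hu] clA [[_ _ hmP _ _] [cq0 nq0] [cq1 nq1] qA univ].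
have cA : compact A by apply: subclosed_compact clA cX _.
have dPtri : forall x y z, dP x z <= dP x y + dP y z by case: hmP.
have objQ : MetCH_sep_obj (dQ d (A := A)).
  split.
  - exact: Qt_compact.
  - exact: Qt_hausdorff.
  - exact: dQ_metric.
  - exact: dQ_sep.
  - exact: dQ_uc.
pose f b := fun x => piQ A (x, b).
have morf b : MetCH_mor d (dQ d (A := A)) (f b).
  split.
    move=> z; have H1 : {for z, continuous (fun x : X => (x, b))}.
      move=> U [[Wz Wb] /= [Wz0 Wb0] HW]; apply: filterS Wz0 => x Wx; apply: (HW (x, b)); split => //; exact: nbhs_singleton.
    exact: (@continuous_comp _ _ _ (fun x => (x, b)) (piQ A) z H1 (@piQ_cont X A (z, b))).
  by move=> x y; rewrite /f dQ_pi // /gammaA eqxx.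
have fA : forall a, A a -> f false a = f true a.
  by move=> a Aa; apply/piQP; right.
have [h [[[_ nh] hq0 hq1] _]] := univ _ _ objQ _ _ (morf false) (morf true) fA.
apply/funext => -[x i]; apply/funext => -[y j]; apply/le_anti/andP; split.
- rewrite /kernel_metric /gammaA /=.
  case: i; case: j => //=;
  first [ by apply: nq0 | by apply: nq1
        | apply/ereal_infP => _ [a Aa <-];
          first [ apply: le_trans (dPtri _ (q0 a) _) _; apply: leeD;
                 [exact: nq0 | rewrite (qA a Aa); exact: nq1]
             | apply: le_trans (dPtri _ (q1 a) _) _; apply: leeD;
                 [exact: nq1 | rewrite -(qA a Aa); exact: nq0] ] ].
- have Eq b z : h ((if b then q1 else q0) z) = f b z.
    by case: b; [move/(congr1 (fun g => g z)): hq1 | move/(congr1 (fun g => g z)): hq0].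
  rewrite -(@dQ_pi R X d A hm (x, i) (y, j)) /kernel_metric /=.
  by have := nh ((if i then q1 else q0) x) ((if j then q1 else q0) y); rewrite !Eq.
Qed.
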